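(* Let $n\ge 2$ and let $S=[A_0,\dots,A_n]$ be an $n$-pre-kite. If the circumcenter and the centroid of $S$ coincide, then $S$ is a regular $n$-simplex.
   Context: An $n$-simplex is the convex hull of $n+1$ affinely independent points in a Euclidean space. It is an $n$-pre-kite if one of its facets (the $(n-1)$-simplex obtained by deleting one vertex) is a regular $(n-1)$-simplex, i.e. has all edges of equal length. The circumcenter of $S$ is the center of the $(n-1)$-sphere in the affine hull of $S$ passing through all vertices; the centroid is $(A_0+\cdots+A_n)/(n+1)$. $S$ is regular if all its edges have the same length. *)

(* Defs.v *)
From HB Require Import structures.
From mathcomp Require Import all_boot all_order all_algebra.
Set Implicit Arguments. Unset Strict Implicit. Unset Printing Implicit Defensive.
Import Order.TTheory GRing.Theory Num.Theory.
Local Open Scope ring_scope.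

Section Simplex.
Variables (R : rcfType) (d : nat).

Definition edist (x y : 'rV[R]_d) : R :=
  Num.sqrt (\sum_(j < d) (x 0 j - y 0 j) ^+ 2).

Variable n : nat.

(* affine independence of A_0, ..., A_n: the vectors A_i - A_0 (i = 1..n)
   are linearly independent *)
Definition affinely_independent (A : 'I_n.+1 -> 'rV[R]_d) : bool :=
  row_free (\matrix_(i < n) (A (lift ord0 i) - A ord0)).

Definition regular_simplex (A : 'I_n.+1 -> 'rV[R]_d) : Prop :=
  forall i j k l : 'I_n.+1, i != j -> k != l ->
    edist (A i) (A j) = edist (A k) (A l).

(* some facet (delete vertex m) is a regular (n-1)-simplex *)
Definition pre_kite (A : 'I_n.+1 -> 'rV[R]_d) : Prop :=
  exists m : 'I_n.+1, forall i j k l : 'I_n.+1,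
    i != m -> j != m -> k != m -> l != m -> i != j -> k != l ->
    edist (A i) (A j) = edist (A k) (A l).

Definition centroid (A : 'I_n.+1 -> 'rV[R]_d) : 'rV[R]_d :=
  (n.+1)%:R^-1 *: \sum_(i < n.+1) A i.

(* O is the circumcenter: O lies in the affine hull of the vertices and is
   equidistant from all of them (such a point is unique for a simplex) *)
Definition is_circumcenter (A : 'I_n.+1 -> 'rV[R]_d) (O : 'rV[R]_d) : Prop :=
  (exists c : 'I_n.+1 -> R, \sum_(i < n.+1) c i = 1 /\
      O = \sum_(i < n.+1) c i *: A i) /\
  forall i j : 'I_n.+1, edist O (A i) = edist O (A j).

End Simplex.

(* Main.v *)
Require Import Defs.
From HB Require Import structures.
From mathcomp Require Import all_boot all_order all_algebra.
From mathcomp Require Import ring.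
Import Order.TTheory GRing.Theory Num.Theory.
Local Open Scope ring_scope.

Set Implicit Arguments. Unset Strict Implicit.
Section Helpers.
Variables (R : rcfType) (d : nat).

Definition dot (u v : 'rV[R]_d) : R := \sum_(k < d) u 0 k * v 0 k.

Lemma dotC u v : dot u v = dot v u.
Proof. by apply: eq_bigr => k _; rewrite mulrC. Qed.

Lemma dotBr u v w : dot u (v - w) = dot u v - dot u w.
Proof. by rewrite /dot -sumrB; apply: eq_bigr => k _; rewrite !mxE mulrBr. Qed.

Lemma dotBl u v w : dot (v - w) u = dot v u - dot w u.
Proof. by rewrite dotC dotBr dotC [dot u w]dotC. Qed.

Lemma dot_sqB u v : dot (u - v) (u - v) = dot u u + dot v v - dot u v *+ 2.
Proof. rewrite !dotBl !dotBr [dot v u]dotC; ring. Qed.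

Lemma dot_sumr I (r : seq I) (P : pred I) u (F : I -> 'rV[R]_d) :
  dot u (\sum_(i <- r | P i) F i) = \sum_(i <- r | P i) dot u (F i).
Proof.
rewrite /dot exchange_big /=; apply: eq_bigr => k _.
by rewrite summxE big_distrr.
Qed.

Lemma dot0r u : dot u 0 = 0.
Proof. by rewrite /dot big1 // => k _; rewrite mxE mulr0. Qed.

Lemma edistE x y : edist x y = Num.sqrt (dot (x - y) (x - y)).
Proof. by rewrite /edist /dot; congr Num.sqrt; apply: eq_bigr => k _; rewrite !mxE expr2. Qed.

Lemma dot_ge0 u : 0 <= dot u u.
Proof. by apply: sumr_ge0 => k _; rewrite -expr2 sqr_ge0. Qed.

Lemma edist_eq x y z w : edist x y = edist z w ->
  dot (x - y) (x - y) = dot (z - w) (z - w).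
Proof. by rewrite !edistE => /eqP; rewrite eqr_sqrt ?dot_ge0 // => /eqP. Qed.

End Helpers.

Lemma sum_ind (R : pzRingType) n (m : 'I_n) (x y : R) :
  \sum_(j < n) (y + (if j == m then x else 0)) = y *+ n + x.
Proof.
rewrite big_split /= sumr_const card_ord; congr (_ + _).
by rewrite (bigD1 m) //= eqxx big1 ?addr0 // => j /negbTE ->.
Qed.

Lemma sum_if (R : pzRingType) n (m : 'I_n) (x : R) :
  \sum_(j < n) (if j == m then x else 0) = x.
Proof. by rewrite (bigD1 m) //= eqxx big1 ?addr0 // => j /negbTE ->. Qed.

Lemma alg1 (R : comPzRingType) (X c Y r : R) :
  X - (c*(Y+1) + (X - c) + (r - c)) = -(r + (Y-1)*c).
Proof. ring. Qed.
Lemma alg2 (R : comPzRingType) (c N r : R) :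
  (N - 1) * (r + N * c) = - (- (r + (N - 1) * c) * (N + 1) + (r - - (r + (N - 1) * c))).
Proof. ring. Qed.
Lemma alg3 (R : comPzRingType) (c N : R) : c = - (- (N * c) + (N - 1) * c).
Proof. ring. Qed.

Theorem theorem6p2 (R : rcfType) (d n : nat) (A : 'I_n.+1 -> 'rV[R]_d) :
  (2 <= n)%N ->
  affinely_independent A ->
  pre_kite A ->
  is_circumcenter A (centroid A) ->
  regular_simplex A.
Proof.
move=> n2 _ [m Hm] [_ Hc].
set G := centroid A.
pose B i := G - A i.
have sumB : \sum_i B i = 0.
  rewrite /B sumrB sumr_const card_ord /G /centroid -scaler_nat scalerA.
  by rewrite mulfV ?scale1r ?subrr // pnatr_eq0.
pose r2 := dot (B ord0) (B ord0).
have Hr i : dot (B i) (B i) = r2 by exact: (edist_eq (Hc i ord0)).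
clearbody r2.
have dist2 i j : dot (A i - A j) (A i - A j) = r2 + r2 - (dot (B i) (B j)) *+ 2.
  have -> : A i - A j = B j - B i by rewrite /B [RHS]addrC opprB addrA subrK.
  by rewrite dot_sqB !Hr dotC.
have [p [q [pm qm pq]]] : exists p q : 'I_n.+1, [/\ p != m, q != m & p != q].
  exists (inord (if val m == 0%N then 1 else 0)), (inord (if val m == 2%N then 1 else 2)).
  rewrite -!val_eqE /= !inordK; last 2 first.
  - by case: ifP => _; rewrite ltnS //; apply: ltnW.
  - by case: ifP => _; rewrite ltnS //; apply: ltnW.
  by case: m {Hm} => [[|[|[|k]]] Hk] /=.
pose c := dot (B p) (B q).
have Hf i j : i != m -> j != m -> i != j -> dot (B i) (B j) = c.
  move=> im jm ij; have := edist_eq (Hm i j p q im jm pm qm ij pq).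
  by rewrite !dist2 => /addrI/oppr_inj/(pmulrnI (isT : (0 < 2)%N)).
clearbody c.
pose N : R := n%:R.
pose e := - (r2 + (N - 1) * c).
have He i : i != m -> dot (B i) (B m) = e.
  move=> im.
  have : dot (B i) (\sum_j B j) = 0 by rewrite sumB dot0r.
  rewrite dot_sumr.
  have -> : \sum_j dot (B i) (B j) =
       \sum_j (c + (if j == m then dot (B i) (B m) - c else 0))
       + \sum_j (if j == i then r2 - c else 0).
    rewrite -big_split; apply: eq_bigr => j _ /=.
    case: (eqVneq j m) => [->|jm]; first by rewrite eq_sym (negbTE im) addr0 addrC subrK.
    rewrite addr0; case: (eqVneq j i) => [->|ji]; first by rewrite Hr addrC subrK.
    by rewrite addr0 Hf // eq_sym.
  rewrite sum_ind sum_if -mulr_natr => h.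
  rewrite /e -[LHS]subr0 -h /N -natr1; apply: alg1.
have E2 : e * (N + 1) + (r2 - e) = 0.
  have : dot (B m) (\sum_j B j) = 0 by rewrite sumB dot0r.
  rewrite dot_sumr.
  have -> : \sum_j dot (B m) (B j) = \sum_j (e + (if j == m then r2 - e else 0)).
    apply: eq_bigr => j _ /=.
    case: (eqVneq j m) => [->|jm]; first by rewrite Hr addrC subrK.
    by rewrite addr0 dotC He.
  by rewrite sum_ind -mulr_natr -natr1.
have hN : N != 0 by rewrite pnatr_eq0 -lt0n ltnW.
have hN1 : N - 1 != 0.
  rewrite subr_eq0; apply/negP => /eqP h.
  have : (n == 1)%N by rewrite -(eqr_nat R) -/N h.
  by move/eqP=> h1; rewrite h1 in n2.
have ce : c = e.
  have h3 : (N - 1) * (r2 + N * c) = 0.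
    by rewrite -oppr0 -E2 /e; apply: alg2.
  move/eqP: h3; rewrite mulf_eq0 (negbTE hN1) /= addrC addr_eq0 => /eqP h4.
  by rewrite /e -[r2]opprK -h4; apply: alg3.
have Hall i j : i != j -> dot (B i) (B j) = e.
  move=> ij; case: (eqVneq i m) => [eim|im].
    by rewrite eim in ij *; rewrite dotC He // eq_sym.
  case: (eqVneq j m) => [->|jm]; first exact: He.
  by rewrite Hf.
move=> i j k l ij kl.
by rewrite !edistE !dist2 !Hall.
Qed.
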